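(* Let $S$ be a smooth cubic surface over $\mathbb{Q}$ that does not contain three pairwise disjoint lines defined over $\mathbb{Q}$. Then the number of lines on $S$ defined over $\mathbb{Q}$ is $0,1,2,3,$ or $5$.
   Context: A line on $S$ is defined over $\mathbb{Q}$ if it is cut out by linear forms with rational coefficients and is contained in $S$. A skew triple is a set of three pairwise disjoint (skew) lines on $S$. *)

(* Defs.v *)
From HB Require Import structures.
From mathcomp Require Import all_boot all_order all_algebra all_field.
From mathcomp Require Import mpoly.
Set Implicit Arguments. Unset Strict Implicit. Unset Printing Implicit Defensive.
Import Order.TTheory GRing.Theory Num.Theory.
Local Open Scope ring_scope.

(* A cubic form in the homogeneous coordinates x_0..x_3 of P^3 over Q. *)
Definition cubic_form (F : {mpoly rat[4]}) : Prop :=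
  F != 0 /\ F \is 3.-homog.

Definition F_alg (F : {mpoly rat[4]}) : {mpoly algC[4]} :=
  map_mpoly (fun q : rat => ratr q : algC) F.

(* The surface V(F) is smooth: no point of P^3(Qbar) at which all partial
   derivatives of F vanish (in characteristic 0 this forces F = 0 there too
   by Euler's formula, so this is the usual Jacobian criterion). *)
Definition smooth_surface (F : {mpoly rat[4]}) : Prop :=
  forall x : 'I_4 -> algC, (exists i, x i != 0) ->
    exists i : 'I_4, (mderiv i (F_alg F)).@[x] != 0.

Definition smooth_cubic_surface (F : {mpoly rat[4]}) : Prop :=
  cubic_form F /\ smooth_surface F.

(* A line of P^3 defined over Q is a 2-dimensional Q-subspace of Q^4;
   it lies on S = V(F) iff F vanishes on all of it. *)
Definition rat_line_on (F : {mpoly rat[4]}) (L : {vspace 'rV[rat]_4}) : Prop :=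
  \dim L = 2%N /\ forall v : 'rV[rat]_4, v \in L -> F.@[fun i => v ord0 i] = 0.

(* Two lines are skew (disjoint in P^3) iff the subspaces meet only in 0. *)
Definition skew (L1 L2 : {vspace 'rV[rat]_4}) : Prop := (L1 :&: L2)%VS = 0%VS.

Definition has_rat_skew_triple (F : {mpoly rat[4]}) : Prop :=
  exists L1 L2 L3, rat_line_on F L1 /\ rat_line_on F L2 /\ rat_line_on F L3 /\
    skew L1 L2 /\ skew L1 L3 /\ skew L2 L3.

(* Main.v *)
From HB Require Import structures.
From mathcomp Require Import all_boot all_order all_algebra all_field.
From mathcomp Require Import mpoly.
From mathcomp Require Import ring lra.
Require Import Defs.
Set Implicit Arguments. Unset Strict Implicit. Unset Printing Implicit Defensive.
Import Order.TTheory GRing.Theory Num.Theory.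
Local Open Scope ring_scope.

Definition trip := ('I_4 * 'I_4 * 'I_4)%type.

Definition mon3 (R : comNzRingType) (t : trip) : {mpoly R[4]} :=
  'X_t.1.1 * 'X_t.1.2 * 'X_t.2.

Arguments mon3 {R} t.
Definition sym3 (R : comNzRingType) (t : trip) (x y z : 'rV[R]_4) : R :=
  let a := t.1.1 in let b := t.1.2 in let d := t.2 in
  x 0 a * y 0 b * z 0 d + x 0 a * y 0 d * z 0 b + x 0 b * y 0 a * z 0 d
  + x 0 b * y 0 d * z 0 a + x 0 d * y 0 a * z 0 b + x 0 d * y 0 b * z 0 a.

Definition Bf (R : comNzRingType) (r : seq (R * trip)) (x y z : 'rV[R]_4) : R :=
  \sum_(e <- r) e.1 * sym3 e.2 x y z.

Section Trilin.
Variables (R : comNzRingType) (r : seq (R * trip)).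
Local Notation B := (Bf r).

Lemma B12 x y z : B x y z = B y x z.
Proof. by apply: eq_bigr => e _; rewrite /sym3 /=; ring. Qed.
Lemma B23 x y z : B x y z = B x z y.
Proof. by apply: eq_bigr => e _; rewrite /sym3 /=; ring. Qed.
Lemma B13 x y z : B x y z = B z y x.
Proof. by apply: eq_bigr => e _; rewrite /sym3 /=; ring. Qed.

Lemma Blin1 s x y z w : B (s *: x + y) z w = s * B x z w + B y z w.
Proof.
rewrite /Bf mulr_sumr -big_split; apply: eq_bigr => e _.
rewrite /sym3 /= !mxE; ring.
Qed.
Lemma Blin2 s x y z w : B z (s *: x + y) w = s * B z x w + B z y w.
Proof. by rewrite B12 Blin1 ![B _ z _]B12. Qed.
Lemma Blin3 s x y z w : B z w (s *: x + y) = s * B z w x + B z w y.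
Proof. by rewrite B13 Blin1 ![B _ w z]B13. Qed.
Lemma Bzero1 y z : B 0 y z = 0.
Proof. by rewrite /Bf big1 // => e _; rewrite /sym3 !mxE; ring. Qed.

Lemma Bev F (x : 'rV[R]_4) : F = \sum_(e <- r) e.1 *: mon3 e.2 ->
  6 * F.@[fun i => x 0 i] = B x x x.
Proof.
move=> ->; rewrite (big_morph _ (mevalD _) (meval0 _)) mulr_sumr; apply: eq_bigr => e _.
rewrite mevalZ /mon3 !mevalM !mevalXU /sym3 /=; ring.
Qed.

Lemma Bder F (x : 'rV[R]_4) l : F = \sum_(e <- r) e.1 *: mon3 e.2 ->
  2 * (mderiv l F).@[fun i => x 0 i] = B (delta_mx 0 l) x x.
Proof.
move=> ->; rewrite (big_morph _ (@mderivD _ _ l) (@mderiv0 _ _ l)).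
rewrite (big_morph _ (mevalD _) (meval0 _)) mulr_sumr; apply: eq_bigr => e _.
rewrite mderivZ mevalZ /mon3 !mderivM !mevalD !mevalM !mevalXU.
have dX : forall (i : 'I_4), (mderiv l ('X_i : {mpoly R[4]})).@[fun i => x 0 i] = (i == l)%:R.
  move=> i; rewrite mderivX mnm1E mevalZ.
  case: eqP => [->|_]; last by rewrite mul0r.
  have -> : (U_(l) - U_(l) = 0)%MM by apply/mnmP => j; rewrite !mnmE subnn.
  by rewrite mpolyX0 meval1 mulr1.
rewrite !mevalD !mevalM !mevalXU !dX /sym3 /= !mxE /=.
ring.
Qed.
End Trilin.

Lemma mdeg_split (m : 'X_{1..4}) k : mdeg m = k.+1 ->
  exists i, exists m', m = (m' + U_(i))%MM /\ mdeg m' = k.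
Proof.
move=> Hm.
have [i Hi] : exists i, (0 < m i)%N.
  apply/existsP; apply: contraT; rewrite negb_exists => /forallP H.
  have m0 : m = 0%MM by apply/mnmP => j; rewrite mnmE; move: (H j); rewrite lt0n negbK => /eqP.
  by move: Hm; rewrite m0 mdeg0.
exists i; exists (m - U_(i))%MM; split.
  rewrite submK //; apply/mnm_lepP => j; rewrite mnm1E.
  by case: eqP => [<-|]. 
have := mdegD (m - U_(i))%MM U_(i); rewrite submK ?mdeg1 ?Hm ?addn1; first by case.
by apply/mnm_lepP => j; rewrite mnm1E; case: eqP => [<-|].
Qed.

Lemma mdeg3_mon (R : comNzRingType) (m : 'X_{1..4}) : mdeg m = 3%N ->
  exists t : trip, 'X_[m] = mon3 (R:=R) t.
Proof.
move=> /mdeg_split [d [m1 [-> /mdeg_split [b [m2 [-> /mdeg_split [a [m3 [-> H3]]]]]]]]].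
have -> : m3 = 0%MM by apply/eqP; rewrite -mdeg_eq0 H3.
exists (a, b, d); by rewrite /mon3 /= !mpolyXD mpolyX0 mul1r.
Qed.

Lemma rep3 (F : {mpoly rat[4]}) : F \is 3.-homog ->
  exists r : seq (rat * trip), F = \sum_(e <- r) e.1 *: mon3 e.2.
Proof.
move=> /dhomogP Hh.
suff : forall s, {subset s <= msupp F} ->
  exists r : seq (rat * trip), \sum_(m <- s) F@_m *: 'X_[m] = \sum_(e <- r) e.1 *: mon3 e.2.
  by move=> /(_ (msupp F) (fun x h => h)) [r Hr]; exists r; rewrite {1}(mpolyE F) Hr.
elim=> [|m s IH] Hs; first by exists [::]; rewrite !big_nil.
have [|r Hr] := IH; first by move=> x hx; apply: Hs; rewrite inE hx orbT.
have [t Ht] := mdeg3_mon rat (Hh m (Hs m (mem_head _ _))).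
by exists ((F@_m, t) :: r); rewrite !big_cons Hr Ht.
Qed.

Definition rmap (r : seq (rat * trip)) : seq (algC * trip) :=
  map (fun e => (ratr e.1, e.2)) r.

Lemma F_alg_rep (F : {mpoly rat[4]}) r : F = \sum_(e <- r) e.1 *: mon3 e.2 ->
  F_alg F = \sum_(e <- rmap r) e.1 *: mon3 e.2.
Proof.
move=> ->; rewrite /F_alg raddf_sum big_map; apply: eq_bigr => e _.
rewrite /= (map_mpolyZ ratr) /mon3 /=; congr (_ *: _).
by rewrite !(rmorphM (map_mpoly ratr)) /= !(map_mpolyX ratr).
Qed.

Lemma Bmap r (x y z : 'rV[rat]_4) :
  ratr (Bf r x y z) = Bf (rmap r) (map_mx ratr x) (map_mx ratr y) (map_mx ratr z) :> algC.
Proof.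
rewrite /Bf rmorph_sum big_map; apply: eq_bigr => e _.
by rewrite /sym3 !mxE !(rmorphM, rmorphD).
Qed.

Section Expand.
Variables (R : comNzRingType) (r : seq (R * trip)).
Local Notation B := (Bf r).

Lemma Ecube s t x y :
  B (s *: x + t *: y) (s *: x + t *: y) (s *: x + t *: y) =
  s^+3 * B x x x + 3 * s^+2 * t * B x x y + 3 * s * t^+2 * B x y y + t^+3 * B y y y.
Proof.
rewrite /Bf !mulr_sumr -!big_split /=; apply: eq_bigr => e _.
rewrite /sym3 !mxE; ring.
Qed.

Lemma Equad s t x y w :
  B (s *: x + t *: y) (s *: x + t *: y) w =
  s^+2 * B x x w + 2 * s * t * B x y w + t^+2 * B y y w.
Proof.
rewrite /Bf !mulr_sumr -!big_split /=; apply: eq_bigr => e _.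
rewrite /sym3 !mxE; ring.
Qed.

Lemma Eplane x y z p u v :
  B (x *: p + y *: u + z *: v) (x *: p + y *: u + z *: v) (x *: p + y *: u + z *: v) =
  x^+3 * B p p p + y^+3 * B u u u + z^+3 * B v v v
  + 3 * x^+2 * y * B p p u + 3 * x^+2 * z * B p p v + 3 * x * y^+2 * B p u u
  + 3 * x * z^+2 * B p v v + 3 * y^+2 * z * B u u v + 3 * y * z^+2 * B u v v
  + 6 * x * y * z * B p u v.
Proof.
rewrite /Bf !mulr_sumr -!big_split /=; apply: eq_bigr => e _.
rewrite /sym3 !mxE; ring.
Qed.

Lemma Equad3 x y z p u v w :
  B (x *: p + y *: u + z *: v) (x *: p + y *: u + z *: v) w =
  x^+2 * B p p w + y^+2 * B u u w + z^+2 * B v v w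
  + 2 * x * y * B p u w + 2 * x * z * B p v w + 2 * y * z * B u v w.
Proof.
rewrite /Bf !mulr_sumr -!big_split /=; apply: eq_bigr => e _.
rewrite /sym3 !mxE; ring.
Qed.
Lemma Elin4 a b c d w1 w2 w3 w4 x y :
  B x y (a *: w1 + b *: w2 + c *: w3 + d *: w4) =
  a * B x y w1 + b * B x y w2 + c * B x y w3 + d * B x y w4.
Proof.
rewrite /Bf !mulr_sumr -!big_split /=; apply: eq_bigr => e _.
rewrite /sym3 !mxE; ring.
Qed.
End Expand.
Section VS.
Variables (K : fieldType) (vT : vectType K).
Implicit Types (x y z w p u v : vT) (X Y Z P L : {vspace vT}).

Lemma mem_span1 w x : w \in <<[:: x]>>%VS <-> exists s, w = s *: x.
Proof. by rewrite span_seq1; split => /vlineP. Qed.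

Lemma mem_span2 w x y : w \in <<[:: x; y]>>%VS <-> exists s t, w = s *: x + t *: y.
Proof.
rewrite span_cons span_seq1; split.
  by move/memv_addP => [a /vlineP [s ->] [b /vlineP [t ->] ->]]; exists s, t.
by move=> [s [t ->]]; apply: memv_add; apply: memvZ; apply: memv_line.
Qed.

Lemma mem_span3 w x y z : w \in <<[:: x; y; z]>>%VS <->
  exists s t k, w = s *: x + t *: y + k *: z.
Proof.
rewrite span_cons; split.
  move/memv_addP => [a /vlineP [s ->] [b /mem_span2 [t [k ->]] ->]].
  by exists s, t, k; rewrite addrA.
move=> [s [t [k ->]]]; rewrite -addrA; apply: memv_add.
  by apply: memvZ; apply: memv_line.
by apply/mem_span2; exists t, k.
Qed.

Lemma mem_span4 w x y z z' : w \in <<[:: x; y; z; z']>>%VS <->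
  exists s t k k', w = s *: x + t *: y + k *: z + k' *: z'.
Proof.
rewrite span_cons; split.
  move/memv_addP => [a /vlineP [s ->] [b /mem_span3 [t [k [k' ->]]] ->]].
  by exists s, t, k, k'; rewrite !addrA.
move=> [s [t [k [k' ->]]]]; rewrite -!addrA; apply: memv_add.
  by apply: memvZ; apply: memv_line.
by apply/mem_span3; exists t, k, k'; rewrite !addrA.
Qed.

Lemma freeD (s : seq vT) : free s -> \dim <<s>> = size s.
Proof. by move/eqP. Qed.

Lemma sub_eqdim X Y : (X <= Y)%VS -> (\dim Y <= \dim X)%N -> X = Y.
Proof. by move=> h1 h2; apply/eqP; rewrite eqEdim h1 h2. Qed.

Lemma line_basis X p : \dim X = 2%N -> p \in X -> p != 0 ->
  exists u, [/\ u \in X, u \notin <[p]>%VS & X = <<[:: u; p]>>%VS].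
Proof.
move=> dX pX p0.
have : ~~ (X <= <[p]>)%VS.
  apply/negP => /dimvS; rewrite dX dim_vline p0 //.
move/subvPn => [u uX up]; exists u; split => //.
have fr : free [:: u; p] by rewrite free_cons seq1_free p0 span_seq1 up.
symmetry; apply: sub_eqdim; last by rewrite (freeD fr) dX.
by apply/span_subvP => w; rewrite !inE => /orP [] /eqP ->.
Qed.

Lemma meet_in X Y P : (X <= P)%VS -> (Y <= P)%VS -> \dim X = 2%N -> \dim Y = 2%N ->
  \dim P = 3%N -> (X :&: Y)%VS != 0%VS.
Proof.
move=> XP YP dX dY dP; apply/negP => /eqP h.
have := dimv_sum_cap X Y; rewrite h dimv0 dX dY addn0 => e.
have : (\dim (X + Y) <= \dim P)%N by apply: dimvS; rewrite subv_add XP YP.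
by rewrite e dP.
Qed.

Lemma sum_full X Y P : (X <= P)%VS -> (Y <= P)%VS -> \dim X = 2%N -> \dim Y = 2%N ->
  \dim P = 3%N -> X != Y -> (X + Y)%VS = P.
Proof.
move=> XP YP dX dY dP nXY; apply: sub_eqdim; first by rewrite subv_add XP YP.
rewrite dP; case: (ltnP 2 (\dim (X + Y))) => // h.
have eX : X = (X + Y)%VS by apply: sub_eqdim; [exact: addvSl | rewrite dX].
have eY : Y = (X + Y)%VS by apply: sub_eqdim; [exact: addvSr | rewrite dY].
by move: nXY; rewrite {1}eX -eY eqxx.
Qed.

Lemma onedim Z q1 q2 : (\dim Z <= 1)%N -> q1 \in Z -> q2 \in Z -> q1 != 0 ->
  q2 \in <[q1]>%VS.
Proof.
move=> dZ h1 h2 n1.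
have e : <[q1]>%VS = Z.
  apply: sub_eqdim; first by rewrite -memvE.
  by rewrite dim_vline n1.
by rewrite e.
Qed.

Hypothesis d4 : \dim (fullv : {vspace vT}) = 4%N.

Lemma out_meet L P : \dim L = 2%N -> \dim P = 3%N -> ~~ (L <= P)%VS ->
  [/\ (L :&: P)%VS != 0%VS, (\dim (L :&: P) <= 1)%N & (L + P)%VS = fullv].
Proof.
move=> dL dP nLP.
have e := dimv_sum_cap L P; rewrite dL dP in e.
have s4 : (\dim (L + P) <= 4)%N by rewrite -d4; apply: dimvS; apply: subvf.
have c1 : (\dim (L :&: P) <= 1)%N.
  case: (ltnP 1 (\dim (L :&: P))) => // h.
  have : (L :&: P)%VS = L.
    apply: sub_eqdim; first exact: capvSl.
    by rewrite dL.
  by move=> eL; move: nLP; rewrite -eL capvSr.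
split => //.
  apply/negP => /eqP h; move: e; rewrite h dimv0 addn0 => e'.
  by move: s4; rewrite e'.
apply: sub_eqdim; first exact: subvf.
rewrite d4; move: e c1; case: (\dim (L :&: P)) => [|[|k]] //=.
  by move=> e _; move: e; rewrite addn0 => ->.
by move=> e _; move: e; rewrite addn1 => [[->]].
Qed.

Lemma exists_out P : \dim P = 3%N -> exists w, w \notin P.
Proof.
move=> dP; have : ~~ (fullv <= P)%VS.
  by apply/negP => /dimvS; rewrite d4 dP.
by move/subvPn => [w _ h]; exists w.
Qed.
End VS.

Definition mt (L M : {vspace 'rV[rat]_4}) : bool := (L :&: M)%VS != 0%VS.
Definition one3 (x y z : bool) :=
  [|| x && ~~ y && ~~ z, ~~ x && y && ~~ z | ~~ x && ~~ y && z].

Lemma mtP (L M : {vspace 'rV[rat]_4}) q : q \in L -> q \in M -> q != 0 -> mt L M.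
Proof.
move=> qL qM q0; apply/negP => /eqP h.
have : q \in (L :&: M)%VS by apply/memv_capP.
by rewrite h memv0 (negbTE q0).
Qed.

Lemma mt_pick (L M : {vspace 'rV[rat]_4}) : mt L M ->
  [/\ vpick (L :&: M) \in L, vpick (L :&: M) \in M & vpick (L :&: M) != 0].
Proof.
move=> h; have /memv_capP [h1 h2] := memv_pick (L :&: M)%VS.
by split => //; rewrite vpick0.
Qed.

Lemma cover3 (l X Y Z : {vspace 'rV[rat]_4}) :
  \dim l = 2%N -> \dim X = 2%N -> \dim Y = 2%N -> \dim Z = 2%N ->
  (forall w, w \in l -> [\/ w \in X, w \in Y | w \in Z]) -> [\/ l = X, l = Y | l = Z].
Proof.
move=> dl dX dY dZ H.
have l0 : l != 0%VS by apply/negP => /eqP h; move: dl; rewrite h dimv0.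
set e1 := vpick l.
have e10 : e1 != 0 by rewrite vpick0.
have [e2 [e2l _ el]] := line_basis dl (memv_pick l) e10.
pose w (k : nat) := e1 + k%:R *: e2.
have wl : forall k, w k \in l by move=> k; rewrite el; apply/mem_span2; exists k%:R, 1; rewrite scale1r addrC.
have pr : forall (W : {vspace 'rV[rat]_4}) i j, \dim W = 2%N -> w i \in W -> w j \in W -> i != j -> l = W.
  move=> W i j dW hi hj nij; apply: sub_eqdim; last by rewrite dW dl.
  have ij : (j%:R - i%:R : rat) != 0 by rewrite subr_eq0 eqr_nat eq_sym.
  have e2W : e2 \in W.
    have -> : e2 = (j%:R - i%:R)^-1 *: (w j - w i).
      by apply/rowP => t; rewrite /w !mxE; field.
    by apply: memvZ; apply: memvB.
  have e1W : e1 \in W.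
    have -> : e1 = w i - i%:R *: e2 by apply/rowP => t; rewrite /w !mxE; ring.
    by apply: memvB => //; apply: memvZ.
  by rewrite el; apply/span_subvP => t; rewrite !inE => /orP [] /eqP ->.
have := H _ (wl 0%N); have := H _ (wl 1%N); have := H _ (wl 2%N); have := H _ (wl 3%N).
case=> h3; case=> h2; case=> h1; case=> h0;
 first [ by apply: Or31; apply: (pr X _ _ dX h0 h1)
       | by apply: Or31; apply: (pr X _ _ dX h0 h2)
       | by apply: Or31; apply: (pr X _ _ dX h0 h3)
       | by apply: Or31; apply: (pr X _ _ dX h1 h2)
       | by apply: Or31; apply: (pr X _ _ dX h1 h3)
       | by apply: Or31; apply: (pr X _ _ dX h2 h3)
       | by apply: Or32; apply: (pr Y _ _ dY h0 h1)
       | by apply: Or32; apply: (pr Y _ _ dY h0 h2)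
       | by apply: Or32; apply: (pr Y _ _ dY h0 h3)
       | by apply: Or32; apply: (pr Y _ _ dY h1 h2)
       | by apply: Or32; apply: (pr Y _ _ dY h1 h3)
       | by apply: Or32; apply: (pr Y _ _ dY h2 h3)
       | by apply: Or33; apply: (pr Z _ _ dZ h0 h1)
       | by apply: Or33; apply: (pr Z _ _ dZ h0 h2)
       | by apply: Or33; apply: (pr Z _ _ dZ h0 h3)
       | by apply: Or33; apply: (pr Z _ _ dZ h1 h2)
       | by apply: Or33; apply: (pr Z _ _ dZ h1 h3)
       | by apply: Or33; apply: (pr Z _ _ dZ h2 h3) ].
Qed.

Lemma indep3 (p u v : 'rV[rat]_4) x y z : p != 0 -> u \notin <[p]>%VS ->
  v \notin <<[:: u; p]>>%VS -> x *: p + y *: u + z *: v = 0 -> [/\ x = 0, y = 0 & z = 0].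
Proof.
move=> p0 up vup e.
have z0 : z = 0.
  apply/eqP; apply: contraT => hz; exfalso; move/negP: vup; apply; apply/mem_span2.
  exists (- y / z), (- x / z); apply/rowP => t.
  have := congr1 (fun M : 'rV[rat]_4 => M 0 t) e; rewrite !mxE => et.
  rewrite (_ : v 0 t = (z * v 0 t) / z); last by field.
  rewrite (_ : z * v 0 t = - (x * p 0 t) - y * u 0 t); first by field.
  by move: et; lra.
have y0 : y = 0.
  apply/eqP; apply: contraT => hy; exfalso; move/negP: up; apply; apply/vlineP.
  exists (- x / y); apply/rowP => t.
  have := congr1 (fun M : 'rV[rat]_4 => M 0 t) e; rewrite !mxE z0 => et.
  rewrite (_ : u 0 t = (y * u 0 t) / y); last by field.
  rewrite (_ : y * u 0 t = - (x * p 0 t)); first by field.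
  by move: et; lra.
split => //; move: e; rewrite y0 z0 !scale0r !addr0 => /eqP; rewrite scaler_eq0 (negbTE p0) orbF.
by move/eqP.
Qed.

Lemma uniq3 (p u v : 'rV[rat]_4) x y z x' y' z' : p != 0 -> u \notin <[p]>%VS ->
  v \notin <<[:: u; p]>>%VS -> x *: p + y *: u + z *: v = x' *: p + y' *: u + z' *: v ->
  [/\ x = x', y = y' & z = z'].
Proof.
move=> p0 up vup e.
have := @indep3 p u v (x - x') (y - y') (z - z') p0 up vup.
case.
  apply/rowP => t; have := congr1 (fun M : 'rV[rat]_4 => M 0 t) e; rewrite !mxE => et.
  by move: et; lra.
by move=> /eqP; rewrite subr_eq0 => /eqP -> /eqP; rewrite subr_eq0 => /eqP -> /eqP; rewrite subr_eq0 => /eqP ->.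
Qed.

Lemma quad_root (a b c : algC) : a != 0 -> exists x, a * x ^+ 2 + b * x + c = 0.
Proof.
move=> a0; set s := sqrtC (b ^+ 2 - 4 * a * c).
have hs : s ^+ 2 = b ^+ 2 - 4 * a * c by rewrite /s sqrtCK.
exists ((- b + s) / (2 * a)).
have -> : a * ((- b + s) / (2 * a)) ^+ 2 + b * ((- b + s) / (2 * a)) + c =
   (s ^+ 2 - (b ^+ 2 - 4 * a * c)) / (4 * a).
  by field.
by rewrite hs subrr mul0r.
Qed.

Lemma d4Q : \dim (fullv : {vspace 'rV[rat]_4}) = 4%N.
Proof. by rewrite dimvf /dim /= mul1n. Qed.

Section Geo.
Variables (F : {mpoly rat[4]}) (r : seq (rat * trip)).
Hypothesis Hr : F = \sum_(e <- r) e.1 *: mon3 e.2.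
Hypothesis Hsm : smooth_surface F.
Local Notation B := (Bf r).
Local Notation Bc := (Bf (rmap r)).
Local Notation Ln := (rat_line_on F).

Lemma fB (v : 'rV[rat]_4) : (F.@[fun i => v ord0 i] = 0) <-> B v v v = 0.
Proof.
rewrite -(Bev v Hr); split; first by move=> ->; rewrite mulr0.
by move/eqP; rewrite mulf_eq0 => /orP [] // /eqP.
Qed.

Lemma singC (q : 'rV[algC]_4) : q != 0 -> (forall l, Bc (delta_mx 0 l) q q = 0) -> False.
Proof.
move=> q0 H.
have [i Hi] : exists i, q 0 i != 0.
  apply/existsP; apply: contraT; rewrite negb_exists => /forallP h.
  move: q0; suff -> : q = 0 by rewrite eqxx.
  by apply/rowP => j; rewrite mxE; apply/eqP; move: (h j); rewrite negbK.
have [j Hj] := Hsm (ex_intro _ i Hi).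
have := Bder q j (F_alg_rep Hr); rewrite H => /eqP; rewrite mulf_eq0 (negbTE Hj) orbF.
by move=> /eqP h; have := @pnatr_eq0 algC 2; rewrite h eqxx.
Qed.

Lemma singQ (q : 'rV[rat]_4) : q != 0 -> (forall w, B q q w = 0) -> False.
Proof.
move=> q0 H; apply: (@singC (map_mx ratr q)); first by rewrite map_mx_eq0.
move=> l; rewrite B13 -(map_delta_mx ratr) -Bmap H.
by rewrite rmorph0.
Qed.

Lemma tang L q w : Ln L -> q \in L -> w \in L -> B q q w = 0 /\ B q w w = 0.
Proof.
move=> [_ HL] qL wL.
have H : forall s t, B (s *: q + t *: w) (s *: q + t *: w) (s *: q + t *: w) = 0.
  by move=> s t; apply/fB/HL; apply: memvD; apply: memvZ.
have := H 1 0; have := H 0 1; have := H 1 1; have := H 1 (-1).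
rewrite !Ecube; move=> h1 h2 h3 h4.
have e1 : B q q q = 0 by move: h4; rewrite expr1n !expr0n /=; lra.
have e2 : B w w w = 0 by move: h3; rewrite expr1n !expr0n /=; lra.
move: h1 h2; rewrite e1 e2; rewrite !expr1n; move=> h1 h2.
split; lra.
Qed.

Lemma deg (p u v r0 : 'rV[rat]_4) :
  p != 0 -> u \notin <[p]>%VS ->
  (forall w, exists k1 k2 k3 k4, w = k1 *: r0 + k2 *: v + k3 *: u + k4 *: p) ->
  B p p p = 0 -> B p p u = 0 -> B p u u = 0 -> B u u u = 0 ->
  B p p v = 0 -> B p u v = 0 -> B u u v = 0 -> False.
Proof.
move=> p0 up Hsp z1 z2 z3 z4 z5 z6 z7.
pose m (w : 'rV[rat]_4) := map_mx (fun k : rat => ratr k : algC) w.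
have Hm : forall w1 w2 w3, Bc (m w1) (m w2) (m w3) = ratr (B w1 w2 w3).
  by move=> w1 w2 w3; rewrite Bmap.
have [x [y [q0 hq]]] : exists x y, (x *: m p + y *: m u != 0) /\
    (ratr (B p p r0) * x ^+ 2 + 2 * ratr (B p u r0) * x * y + ratr (B u u r0) * y ^+ 2 = 0).
  case: (eqVneq (B p p r0) 0) => hA.
    exists 1, 0; rewrite scale1r scale0r addr0 map_mx_eq0 p0 hA rmorph0; split => //.
    ring.
  have hA' : (ratr (B p p r0) : algC) != 0 by rewrite fmorph_eq0.
  have [x hx] := quad_root (2 * ratr (B p u r0)) (ratr (B u u r0)) hA'.
  exists x, 1; split; last by rewrite -hx; ring.
  rewrite scale1r; apply/negP => /eqP h.
  have [i Hi] : exists i, p 0 i != 0.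
    apply/existsP; apply: contraT; rewrite negb_exists => /forallP hh.
    move: p0; suff -> : p = 0 by rewrite eqxx.
    by apply/rowP => j; rewrite mxE; apply/eqP; move: (hh j); rewrite negbK.
  have hi : x * ratr (p 0 i) + ratr (u 0 i) = 0.
    by have := congr1 (fun M : 'rV[algC]_4 => M 0 i) h; rewrite /m !mxE.
  set k := - (u 0 i / p 0 i).
  have ex : x = ratr k.
    have hpi : (ratr (p 0 i) : algC) != 0 by rewrite fmorph_eq0.
    rewrite /k rmorphN fmorph_div; apply: (mulIf hpi); rewrite mulNr divfK //.
    by move/eqP: hi; rewrite addr_eq0 => /eqP.
  move/negP: up; apply; apply/vlineP; exists (-k); apply/rowP => j; rewrite mxE.
  have := congr1 (fun M : 'rV[algC]_4 => M 0 j) h; rewrite /m !mxE ex.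
  rewrite -rmorphM -rmorphD => /eqP; rewrite fmorph_eq0 addr_eq0 => /eqP e.
  by rewrite mulNr e opprK.
apply: (singC q0) => l; rewrite B13.
have [k1 [k2 [k3 [k4 e]]]] := Hsp (delta_mx 0 l).
have -> : delta_mx 0 l = ratr k1 *: m r0 + ratr k2 *: m v + ratr k3 *: m u + ratr k4 *: m p.
  apply/rowP => j; have := congr1 (fun M : 'rV[rat]_4 => M 0 j) e; rewrite /m !mxE => ej.
  by rewrite -!rmorphM -!rmorphD -ej rmorph_nat.
rewrite Elin4 !Equad !Hm.
have e1 : B p u p = B p p u by rewrite B23.
have e2 : B u u p = B p u u by rewrite B13.
rewrite e1 e2 z1 z2 z3 z4 z5 z6 z7 !rmorph0.
transitivity (ratr k1 * (ratr (B p p r0) * x ^+ 2 + 2 * ratr (B p u r0) * x * y + ratr (B u u r0) * y ^+ 2)).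
  ring.
by rewrite hq mulr0.
Qed.

Lemma Badd3 (x y z1 z2 : 'rV[rat]_4) : B x y (z1 + z2) = B x y z1 + B x y z2.
Proof. by have := Blin3 r 1 z1 z2 x y; rewrite scale1r mul1r. Qed.

Lemma two_meet l X Y P : Ln l -> Ln X -> Ln Y -> (X <= P)%VS -> (Y <= P)%VS ->
  \dim P = 3%N -> X != Y -> ~~ (l <= P)%VS -> mt l X -> mt l Y -> False.
Proof.
move=> Ll LX LY XP YP dP nXY nlP mX mY.
have [_ c1 lP] := out_meet d4Q Ll.1 dP nlP.
have [q1l q1X q10] := mt_pick mX.
have [q2l q2Y q20] := mt_pick mY.
set q1 := vpick (l :&: X)%VS in q1l q1X q10.
set q2 := vpick (l :&: Y)%VS in q2l q2Y q20.
have q1Y : q1 \in Y.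
  have : q1 \in <[q2]>%VS.
    apply: (onedim c1) => //; apply/memv_capP; split => //.
      by apply: (subvP YP).
    by apply: (subvP XP).
  by move/vlineP => [k ->]; apply: memvZ.
apply: (singQ q10) => w.
have wf : w \in (l + (X + Y))%VS by rewrite (sum_full XP YP LX.1 LY.1 dP nXY) lP memvf.
move/memv_addP: wf => [w1 w1l [w23 /memv_addP [w2 w2X [w3 w3Y ->]] ->]].
by rewrite !Badd3 (tang Ll q1l w1l).1 (tang LX q1X w2X).1 (tang LY q1Y w3Y).1 !addr0.
Qed.

Lemma core a b p u v :
  Ln a -> Ln b -> a = <<[:: u; p]>>%VS -> b = <<[:: v; p]>>%VS -> p != 0 ->
  u \notin <[p]>%VS -> v \notin <<[:: u; p]>>%VS ->
  exists c, [/\ Ln c, c != a, c != b, mt a c & mt b c] /\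
  (forall l, Ln l -> l != a -> l != b -> l != c -> one3 (mt l a) (mt l b) (mt l c)).
Proof.
move=> La Lb ea eb p0 up vup.
have vp : v \notin <[p]>%VS.
  apply/negP => /vlineP [k ek]; move/negP: vup; apply; apply/mem_span2.
  by exists 0, k; rewrite scale0r add0r.
set P := <<[:: v; u; p]>>%VS.
have frP : free [:: v; u; p] by rewrite free_cons vup free_cons span_seq1 up seq1_free p0.
have dP : \dim P = 3%N := freeD frP.
have memP : forall w, w \in P <-> exists x y z, w = x *: p + y *: u + z *: v.
  move=> w; rewrite /P mem_span3; split => [[s [t [k ->]]]|[x [y [z ->]]]].
    by exists k, t, s; apply/rowP => i; rewrite !mxE; ring.
  by exists z, y, x; apply/rowP => i; rewrite !mxE; ring.
have pP : p \in P by apply/memP; exists 1, 0, 0; apply/rowP => i; rewrite !mxE; ring.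
have uP : u \in P by apply/memP; exists 0, 1, 0; apply/rowP => i; rewrite !mxE; ring.
have vP : v \in P by apply/memP; exists 0, 0, 1; apply/rowP => i; rewrite !mxE; ring.
have aP : (a <= P)%VS by rewrite ea; apply/span_subvP => w; rewrite !inE => /orP [] /eqP ->.
have bP : (b <= P)%VS by rewrite eb; apply/span_subvP => w; rewrite !inE => /orP [] /eqP ->.
have pa : p \in a by rewrite ea memv_span // !inE eqxx orbT.
have ua : u \in a by rewrite ea memv_span // !inE eqxx.
have pb : p \in b by rewrite eb memv_span // !inE eqxx orbT.
have vb : v \in b by rewrite eb memv_span // !inE eqxx.
have [r0 r0P] := exists_out d4Q dP.
have fr4 : free [:: r0; v; u; p] by rewrite free_cons r0P frP.
have e4 : <<[:: r0; v; u; p]>>%VS = fullv.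
  by apply: sub_eqdim; [exact: subvf | rewrite d4Q (freeD fr4)].
have Hsp : forall w, exists k1 k2 k3 k4, w = k1 *: r0 + k2 *: v + k3 *: u + k4 *: p.
  by move=> w; apply/mem_span4; rewrite e4 memvf.
have Hsp' : forall w, exists k1 k2 k3 k4, w = k1 *: r0 + k2 *: u + k3 *: v + k4 *: p.
  move=> w; have [k1 [k2 [k3 [k4 ->]]]] := Hsp w; exists k1, k3, k2, k4.
  by apply/rowP => i; rewrite !mxE; ring.
have [z1 _] := tang La pa pa.
have [z2 z3] := tang La pa ua.
have [z4 _] := tang La ua ua.
have [z5 z6] := tang Lb pb vb.
have [z7 _] := tang Lb vb vb.
have nd1 : ~ (B p u v = 0 /\ B u u v = 0).
  by move=> [h1 h2]; apply: (deg p0 up Hsp z1 z2 z3 z4 z5 h1 h2).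
have nd2 : ~ (B p u v = 0 /\ B u v v = 0).
  move=> [h1 h2]; apply: (deg p0 vp Hsp' z1 z5 z6 z7 z2); first by rewrite B23.
  by rewrite B13.
set al := B p u v; set be := B u u v; set ga := B u v v.
have plane : forall x y z, B (x *: p + y *: u + z *: v) (x *: p + y *: u + z *: v)
    (x *: p + y *: u + z *: v) = 3 * y * z * (2 * al * x + be * y + ga * z).
  move=> x y z; rewrite Eplane z1 z2 z3 z4 z5 z6 z7 /al /be /ga; ring.
have u3 := uniq3 p0 up vup.
set s1 := be *: p + (- (2 * al)) *: u + 0 *: v.
set s2 := ga *: p + 0 *: u + (- (2 * al)) *: v.
set s3 := 0 *: p + ga *: u + (- be) *: v.
set c := <<[:: s1; s2; s3]>>%VS.
have memc : forall w, w \in c <->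
    exists x y z, w = x *: p + y *: u + z *: v /\ 2 * al * x + be * y + ga * z = 0.
  move=> w; rewrite /c mem_span3; split.
    move=> [k1 [k2 [k3 ->]]].
    exists (k1 * be + k2 * ga), (- (2 * al) * k1 + ga * k3), (- (2 * al) * k2 - be * k3).
    by split; [apply/rowP => i; rewrite /s1 /s2 /s3 !mxE; ring | ring].
  move=> [x [y [z [-> e]]]].
  case: (eqVneq al 0) => hal.
    have hbe : be != 0 by apply/negP => /eqP h; apply: nd1.
    have hga : ga != 0 by apply/negP => /eqP h; apply: nd2.
    have ez : z = - (be * y) / ga.
      by apply: (mulIf hga); rewrite divfK //; move: e; rewrite hal; lra.
    exists (x / be), 0, (y / ga); apply/rowP => i; rewrite /s1 /s2 /s3 !mxE ez hal.
    by field; rewrite hga hbe.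
  have ex : x = - (be * y + ga * z) / (2 * al).
    have h2 : 2 * al != 0 by rewrite mulf_eq0 negb_or hal andbT.
    by apply: (mulIf h2); rewrite divfK //; move: e; lra.
  exists (- y / (2 * al)), (- z / (2 * al)), 0; apply/rowP => i; rewrite /s1 /s2 /s3 !mxE ex.
  by field.
have cpt : forall x y z, x *: p + y *: u + z *: v \in c -> 2 * al * x + be * y + ga * z = 0.
  move=> x y z /memc [x' [y' [z' [e1 e2]]]].
  by have [-> -> ->] := u3 _ _ _ _ _ _ e1.
have ep : p = 1 *: p + 0 *: u + 0 *: v by apply/rowP => i; rewrite !mxE; ring.
have eu : u = 0 *: p + 1 *: u + 0 *: v by apply/rowP => i; rewrite !mxE; ring.
have ev : v = 0 *: p + 0 *: u + 1 *: v by apply/rowP => i; rewrite !mxE; ring.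
have pc_al : p \in c -> al = 0.
  by rewrite {1}ep => /cpt; rewrite !mulr0 !addr0 mulr1 => h; lra.
have uc_be : u \in c -> be = 0.
  by rewrite {1}eu => /cpt; rewrite !mulr0 mulr1 add0r addr0.
have vc_ga : v \in c -> ga = 0.
  by rewrite {1}ev => /cpt; rewrite !mulr0 mulr1 !add0r.
have cP : (c <= P)%VS.
  apply/span_subvP => w; rewrite !inE => /orP [/eqP ->|/orP [] /eqP ->]; apply/memP.
  - by exists be, (- (2 * al)), 0.
  - by exists ga, 0, (- (2 * al)).
  - by exists 0, ga, (- be).
have c_van : forall w, w \in c -> B w w w = 0.
  by move=> w /memc [x [y [z [-> e]]]]; rewrite plane e mulr0.
have dc : \dim c = 2%N.
  have lo : (2 <= \dim c)%N.
    have two : forall w1 w2, w1 \in c -> w2 \in c -> w2 != 0 -> w1 \notin <[w2]>%VS ->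
        (2 <= \dim c)%N.
      move=> w1 w2 h1 h2 n2 n12.
      have fr : free [:: w1; w2] by rewrite free_cons span_seq1 n12 seq1_free n2.
      apply: (@leq_trans (\dim <<[:: w1; w2]>>%VS)); first by rewrite (freeD fr).
      apply: dimvS; apply/span_subvP => w.
      by rewrite !inE => /orP [] /eqP ->.
    have s1c : s1 \in c by rewrite memv_span // !inE eqxx.
    have s2c : s2 \in c by rewrite memv_span // !inE eqxx orbT.
    have s3c : s3 \in c by rewrite memv_span // !inE eqxx !orbT.
    case: (eqVneq al 0) => hal.
      have hga : ga != 0 by apply/negP => /eqP h; apply: nd2.
      have pc : p \in c by apply/memc; exists 1, 0, 0; split; [exact: ep | rewrite hal; ring].
      apply: (two _ _ s3c pc p0); apply/negP => /vlineP [k ek].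
      have : s3 = k *: p + 0 *: u + 0 *: v by rewrite ek; apply/rowP => i; rewrite !mxE; ring.
      by move/u3 => [_ h _]; move: hga; rewrite h eqxx.
    have n2a : - (2 * al) != 0 by rewrite oppr_eq0 mulf_eq0 negb_or hal andbT.
    apply: (two _ _ s1c s2c).
      apply/negP => /eqP h.
      have : s2 = 0 *: p + 0 *: u + 0 *: v by rewrite h; apply/rowP => i; rewrite !mxE; ring.
      by move/u3 => [_ _ h']; move: n2a; rewrite h' eqxx.
    apply/negP => /vlineP [k ek].
    have : s1 = (k * ga) *: p + 0 *: u + (k * - (2 * al)) *: v.
      by rewrite ek /s2; apply/rowP => i; rewrite !mxE; ring.
    by move/u3 => [_ h _]; move: n2a; rewrite h eqxx.
  apply/eqP; rewrite eqn_leq lo andbT; case: (ltnP 2 (\dim c)) => // h3.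
  have ecP : c = P by apply: sub_eqdim => //; rewrite dP.
  by exfalso; apply: nd1; split; [apply: pc_al | apply: uc_be]; rewrite ecP.
have Lc : Ln c by split => // w wc; apply/fB; apply: c_van.
have ca : c != a.
  apply/negP => /eqP e; apply: nd1; split; [apply: pc_al | apply: uc_be]; by rewrite e.
have cb : c != b.
  apply/negP => /eqP e; apply: nd2; split; [apply: pc_al | apply: vc_ga]; by rewrite e.
have secP : forall w, w \in P -> B w w w = 0 -> [\/ w \in a, w \in b | w \in c].
  move=> w /memP [x [y [z ->]]]; rewrite plane => /eqP.
  rewrite !mulf_eq0 => /orP [/orP [/orP [//|] /eqP hy | /eqP hz] | /eqP he].
  - apply: Or32; rewrite eb; apply/mem_span2; exists z, x; rewrite hy.
    by apply/rowP => i; rewrite !mxE; ring.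
  - apply: Or31; rewrite ea; apply/mem_span2; exists y, x; rewrite hz.
    by apply/rowP => i; rewrite !mxE; ring.
  - by apply: Or33; apply/memc; exists x, y, z.
exists c; split.
  by split => //; [exact: (meet_in aP cP La.1 dc dP) | exact: (meet_in bP cP Lb.1 dc dP)].
move=> l Ll la lb lc.
have nab : a != b by apply/negP => /eqP e; move/negP: vup; apply; rewrite -ea e.
case: (boolP (l <= P)%VS) => hlP.
  have := cover3 Ll.1 La.1 Lb.1 dc (fun w wl => secP w (subvP hlP w wl) ((fB w).1 (Ll.2 w wl))).
  by case=> e; [move: la | move: lb | move: lc]; rewrite e eqxx.
have [n0 _ _] := out_meet d4Q Ll.1 dP hlP.
have [ql qP q0] := mt_pick n0.
have one : [\/ mt l a, mt l b | mt l c].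
  case: (secP _ qP ((fB _).1 (Ll.2 _ ql))) => h.
  - by apply: Or31; apply: (mtP ql h q0).
  - by apply: Or32; apply: (mtP ql h q0).
  - by apply: Or33; apply: (mtP ql h q0).
have t1 := two_meet Ll La Lb aP bP dP nab hlP.
have nac : a != c by rewrite eq_sym.
have nbc : b != c by rewrite eq_sym.
have t2 := two_meet Ll La Lc aP cP dP nac hlP.
have t3 := two_meet Ll Lb Lc bP cP dP nbc hlP.
move: one t1 t2 t3; rewrite /one3.
case: (mt l a); case: (mt l b); case: (mt l c) => //= one t1 t2 t3;
  first [ by case: one | by exfalso; apply: t1 | by exfalso; apply: t2 | by exfalso; apply: t3 ].
Qed.

Lemma config a b : Ln a -> Ln b -> a != b -> mt a b ->
  exists c, [/\ Ln c, c != a, c != b, mt a c & mt b c] /\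
  (forall l, Ln l -> l != a -> l != b -> l != c -> one3 (mt l a) (mt l b) (mt l c)).
Proof.
move=> La Lb nab mab.
have [pa pb p0] := mt_pick mab.
set p := vpick (a :&: b)%VS in pa pb p0.
have [u [ua up ea]] := line_basis La.1 pa p0.
have nba : ~~ (b <= a)%VS.
  apply/negP => h; move: nab; suff -> : b = a by rewrite eqxx.
  by apply: sub_eqdim => //; rewrite La.1 Lb.1.
have [v vb va] := subvPn nba.
have vup : v \notin <<[:: u; p]>>%VS by rewrite -ea.
have vp : v \notin <[p]>%VS.
  by apply: contra va => /vlineP [k ->]; apply: memvZ.
have fr : free [:: v; p] by rewrite free_cons span_seq1 vp seq1_free p0.
have eb : b = <<[:: v; p]>>%VS.
  symmetry; apply: sub_eqdim; last by rewrite Lb.1 (freeD fr).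
  by apply/span_subvP => w; rewrite !inE => /orP [] /eqP ->.
exact: (core La Lb ea eb p0 up vup).
Qed.
End Geo.

From Stdlib Require Import Classical.

Lemma one3_12 x y z : one3 x y z -> one3 y x z.
Proof. by case: x; case: y; case: z. Qed.
Lemma one3_23 x y z : one3 x y z -> one3 x z y.
Proof. by case: x; case: y; case: z. Qed.

Section Comb.
Variable T : eqType.
Variable Ln : T -> Prop.
Variable mt : T -> T -> bool.
Hypothesis mt_sym : forall x y, mt x y = mt y x.
Hypothesis nsk : forall x y z, Ln x -> Ln y -> Ln z ->
  ~~ mt x y -> ~~ mt x z -> ~~ mt y z -> False.
Hypothesis cfg : forall a b, Ln a -> Ln b -> a != b -> mt a b ->
  exists c, [/\ Ln c, c != a, c != b, mt a c & mt b c] /\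
  (forall l, Ln l -> l != a -> l != b -> l != c -> one3 (mt l a) (mt l b) (mt l c)).

Lemma five x y z d : Ln x -> Ln y -> Ln z -> Ln d -> x != y -> x != z -> y != z ->
  mt x y -> mt x z -> mt y z ->
  (forall l, Ln l -> l != x -> l != y -> l != z -> one3 (mt l x) (mt l y) (mt l z)) ->
  d != x -> d != y -> d != z -> mt d x -> ~~ mt d y -> ~~ mt d z ->
  exists s : seq T, [/\ uniq s, (forall L, L \in s <-> Ln L) & size s = 5%N].
Proof.
move=> Lx Ly Lz Ld xy xz yz mxy mxz myz H dx dy dz mdx mdy mdz.
have xd : x != d by rewrite eq_sym.
have mxd : mt x d by rewrite mt_sym.
have [d' [[Ld' d'x d'd mxd' mdd'] H2]] := cfg Lx Ld xd mxd.
have d'y : d' != y by apply: contra mdy => /eqP <-.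
have d'z : d' != z by apply: contra mdz => /eqP <-.
have [nd'y nd'z] : ~~ mt d' y /\ ~~ mt d' z.
  by move: (H d' Ld' d'x d'y d'z); rewrite mt_sym mxd' /one3; case: (mt d' y); case: (mt d' z).
have yx : y != x by rewrite eq_sym.
have zx : z != x by rewrite eq_sym.
have yd : y != d by rewrite eq_sym.
have zd : z != d by rewrite eq_sym.
have yd' : y != d' by rewrite eq_sym.
have zd' : z != d' by rewrite eq_sym.
have xd' : x != d' by rewrite eq_sym.
have [nyd nyd'] : ~~ mt y d /\ ~~ mt y d'.
  by move: (H2 y Ly yx yd yd'); rewrite mt_sym mxy /one3; case: (mt y d); case: (mt y d').
have [nzd nzd'] : ~~ mt z d /\ ~~ mt z d'.
  by move: (H2 z Lz zx zd zd'); rewrite mt_sym mxz /one3; case: (mt z d); case: (mt z d').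
exists [:: x; y; z; d; d']; split => //.
  by rewrite /= !inE !negb_or xy xz xd xd' yz yd yd' zd zd' eq_sym d'd.
move=> L; split.
  by rewrite !inE => /orP [/eqP ->|/orP [/eqP ->|/orP [/eqP ->|/orP [/eqP ->|/eqP ->]]]].
move=> LL; apply/negPn/negP; rewrite !inE !negb_or => /and5P [Lx' Ly' Lz' Lnd Lnd'].
have e1 := H L LL Lx' Ly' Lz'.
have e2 := H2 L LL Lx' Lnd Lnd'.
have t1 := nsk Ly Ld LL nyd; rewrite (mt_sym y L) (mt_sym d L) in t1.
have t2 := nsk Lz Ld' LL nzd'; rewrite (mt_sym z L) (mt_sym d' L) in t2.
have t3 := nsk Lz Ld LL nzd; rewrite (mt_sym z L) (mt_sym d L) in t3.
have t4 := nsk Ly Ld' LL nyd'; rewrite (mt_sym y L) (mt_sym d' L) in t4.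
move: e1 e2 t1 t2 t3 t4; rewrite /one3.
case: (mt L x); case: (mt L y); case: (mt L z); case: (mt L d); case: (mt L d') => //=;
  move=> _ _ t1 t2 t3 t4;
  first [ by apply: t1 | by apply: t2 | by apply: t3 | by apply: t4 ].
Qed.

Lemma comb : exists s : seq T,
  [/\ uniq s, (forall L, L \in s <-> Ln L) & size s \in [:: 0; 1; 2; 3; 5]%N].
Proof.
case: (classic (exists a b, [/\ Ln a, Ln b, a != b & mt a b])) => [[a [b [La Lb ab mab]]]|hA].
  have [c [[Lc ca cb mac mbc] H]] := cfg La Lb ab mab.
  have ac : a != c by rewrite eq_sym.
  have bc : b != c by rewrite eq_sym.
  have ba : b != a by rewrite eq_sym.
  have mba : mt b a by rewrite mt_sym.
  have mca : mt c a by rewrite mt_sym.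
  have mcb : mt c b by rewrite mt_sym.
  case: (classic (exists d, [/\ Ln d, d != a, d != b & d != c])) => [[d [Ld da db dc]]|hd].
    have := H d Ld da db dc; rewrite /one3.
    case/orP => [/andP [/andP [m1 m2] m3]|/orP [/andP [/andP [m1 m2] m3]|/andP [/andP [m1 m2] m3]]].
    - have [s [h1 h2 h3]] := five La Lb Lc Ld ab ac bc mab mac mbc H da db dc m1 m2 m3.
      by exists s; split => //; rewrite h3.
    - have [s [h1 h2 h3]] := five Lb La Lc Ld ba bc ac mba mbc mac
        (fun l Ll lb la lc => one3_12 (H l Ll la lb lc)) db da dc m2 m1 m3.
      by exists s; split => //; rewrite h3.
    - have [s [h1 h2 h3]] := five Lc La Lb Ld ca cb ab mca mcb mab
        (fun l Ll lc la lb => one3_12 (one3_23 (H l Ll la lb lc))) dc da db m3 m1 m2.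
      by exists s; split => //; rewrite h3.
  exists [:: a; b; c]; split => //.
    by rewrite /= !inE !negb_or ab eq_sym ca eq_sym cb.
  move=> L; split; first by rewrite !inE => /orP [/eqP ->|/orP [/eqP ->|/eqP ->]].
  move=> LL; apply/negPn/negP; rewrite !inE !negb_or => /and3P [h1 h2 h3].
  by apply: hd; exists L.
have nm : forall a b, Ln a -> Ln b -> a != b -> ~~ mt a b.
  by move=> a b La Lb ab; apply/negP => mab; apply: hA; exists a, b.
case: (classic (exists a, Ln a)) => [[a La]|h0]; last first.
  exists [::]; split => // L; split => // LL; exfalso; apply: h0; by exists L.
case: (classic (exists b, Ln b /\ b != a)) => [[b [Lb ba]]|h1]; last first.
  exists [:: a]; split => // L; rewrite inE; split; first by move/eqP ->.
  move=> LL; apply/negPn/negP => h; apply: h1; by exists L.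
case: (classic (exists c, [/\ Ln c, c != a & c != b])) => [[c [Lc ca cb]]|h2].
  exfalso; apply: (nsk La Lb Lc); apply: nm => //; by rewrite eq_sym.
exists [:: a; b]; split => //; first by rewrite /= inE eq_sym ba.
move=> L; rewrite !inE; split; first by move/orP => [] /eqP ->.
move=> LL; apply/negPn/negP; rewrite negb_or => /andP [h h']; apply: h2; by exists L.
Qed.
End Comb.

Theorem lemma4p13 (F : {mpoly rat[4]}) :
  smooth_cubic_surface F -> ~ has_rat_skew_triple F ->
  exists s : seq {vspace 'rV[rat]_4},
    [/\ uniq s, (forall L, L \in s <-> rat_line_on F L)
      & size s \in [:: 0; 1; 2; 3; 5]%N].
Proof.
move=> [[_ Fh] Hsm] Hn.
have [r Hr] := rep3 Fh.
apply: (@comb _ (rat_line_on F) mt).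
- by move=> x y; rewrite /mt capvC.
- move=> x y z Lx Ly Lz h1 h2 h3; apply: Hn; exists x, y, z.
  by move: h1 h2 h3; rewrite /mt !negbK => /eqP h1 /eqP h2 /eqP h3.
- by move=> a b La Lb ab mab; exact: (config Hr Hsm La Lb ab mab).
Qed.
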